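(* Let $\mathbb{F}$ be a field and $\mathbb{A}$ a countably infinite oligomorphic structure. The following are equivalent: (a) orbit-finitely spanned vector spaces over $\mathbb{A}$ are closed under taking equivariant subspaces (i.e. every equivariant subspace of an orbit-finitely spanned vector space is itself orbit-finitely spanned); (b) for every orbit-finitely spanned vector space $V$ over $\mathbb{A}$, there is no infinite strictly ascending chain of equivariant subspaces of $V$; (c) for every $d \in \{1,2,\dots\}$, the space $\operatorname{Lin}_{\mathbb{F}} \mathbb{A}^d$ has no infinite strictly ascending chain of equivariant subspaces. Furthermore, if these conditions hold, then the orbit-finitely spanned vector spaces over $\mathbb{A}$ are, up to equivariant linear bijections, exactly the quotient spaces $U/W$ where $d \in \{1,2,\dots\}$ and $W \subseteq U$ are equivariant subspaces of $\operatorname{Lin}_{\mathbb{F}}\mathbb{A}^d$.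
   Context: A structure $\mathbb{A}$ is oligomorphic if for every $d\ge 1$ the componentwise action of its automorphism group $\operatorname{Aut}(\mathbb{A})$ on $\mathbb{A}^d$ has finitely many orbits. An orbit-finite set over $\mathbb{A}$ is a set obtained from some $\mathbb{A}^d$ by restricting to an $\operatorname{Aut}(\mathbb{A})$-invariant subset $X\subseteq\mathbb{A}^d$ and then quotienting by an $\operatorname{Aut}(\mathbb{A})$-invariant equivalence relation; it carries the induced action of $\operatorname{Aut}(\mathbb{A})$. For a set $X$ with an action of $\operatorname{Aut}(\mathbb{A})$, $\operatorname{Lin}_{\mathbb{F}} X$ is the vector space of finite formal $\mathbb{F}$-linear combinations of elements of $X$, with action $\pi(\sum_i\lambda_i x_i)=\sum_i \lambda_i\pi(x_i)$. An element $v$ of a set with an $\operatorname{Aut}(\mathbb{A})$-action is supported by $S\subseteq\mathbb{A}$ if every automorphism fixing $S$ pointwise fixes $v$. An orbit-finitely spanned vector space over $\mathbb{A}$ is an $\mathbb{F}$-vector space with an action of $\operatorname{Aut}(\mathbb{A})$ by linear maps such that every vector has a finite support and the space is spanned by some $\operatorname{Aut}(\mathbb{A})$-invariant subset which is an orbit-finite set. A subspace is equivariant if it is invariant under the action of $\operatorname{Aut}(\mathbb{A})$. *)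

(* Defs.v *)
From HB Require Import structures.
From mathcomp Require Import all_boot all_algebra.
From mathcomp Require Import finmap.
From mathcomp Require Import monalg.

Set Implicit Arguments.
Unset Strict Implicit.
Unset Printing Implicit Defensive.

Import GRing.Theory.
Local Open Scope ring_scope.

Record structure := Structure {
  carrier :> countType;
  symb : Type;
  arity : symb -> nat;
  rel : forall s : symb, (arity s).-tuple carrier -> Prop
}.

Record autom (A : structure) := Autom {
  aut_fun :> A -> A;
  aut_inv : A -> A;
  aut_funK : cancel aut_fun aut_inv;
  aut_invK : cancel aut_inv aut_fun;
  aut_rel : forall (s : symb A) (t : (arity s).-tuple A),
      rel t <-> rel (map_tuple aut_fun t)
}.

Definition tact (A : structure) (d : nat) (pi : autom A) (t : d.-tuple A)
  : d.-tuple A := map_tuple pi t.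

(* A is countably infinite (it is a countType, and it is infinite). *)
Definition countably_infinite (A : structure) : Prop :=
  exists f : nat -> A, injective f.

Definition oligomorphic (A : structure) : Prop :=
  forall d : nat, (1 <= d)%N ->
    exists reps : seq (d.-tuple A),
      forall t : d.-tuple A, exists2 r, r \in reps &
        exists pi : autom A, tact pi r = t.

Section Spaces.
Variables (F : fieldType) (A : structure).

Definition lin_action (V : lmodType F) (act : autom A -> V -> V) : Prop :=
  [/\ forall pi (u v : V), act pi (u + v) = act pi u + act pi v,
      forall pi (c : F) (v : V), act pi (c *: v) = c *: act pi v,
      forall (rho : autom A) (v : V), (forall a, rho a = a) -> act rho v = v &
      forall (pi sigma rho : autom A) (v : V),
        (forall a, rho a = pi (sigma a)) -> act rho v = act pi (act sigma v)].

Definition supported_by (V : Type) (act : autom A -> V -> V)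
  (S : seq A) (v : V) : Prop :=
  forall pi : autom A, (forall a, a \in S -> pi a = a) -> act pi v = v.

Definition fin_supp (V : Type) (act : autom A -> V -> V) : Prop :=
  forall v : V, exists S : seq A, supported_by act S v.

Definition invariant (V : Type) (act : autom A -> V -> V) (X : V -> Prop) :=
  forall pi v, X v -> X (act pi v).

(* The subset X of V, with the induced action, is an orbit-finite set:
   it is equivariantly in bijection with P/E for some invariant
   P subset of A^d and invariant equivalence relation E on P.
   The bijection P/E -> X is given by the map f : P -> X whose fibres
   are exactly the E-classes. *)
Definition orbit_finite_subset (V : Type) (act : autom A -> V -> V)
  (X : V -> Prop) : Prop :=
  exists (d : nat) (P : d.-tuple A -> Prop) (E : d.-tuple A -> d.-tuple A -> Prop)
         (f : d.-tuple A -> V),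
  [/\
      forall pi t, P t -> P (tact pi t),
      (forall t, P t -> E t t) /\
      (forall t u, P t -> P u -> E t u -> E u t) /\
      (forall t u w, P t -> P u -> P w -> E t u -> E u w -> E t w),
      forall pi t u, P t -> P u -> E t u -> E (tact pi t) (tact pi u),
      (forall t, P t -> X (f t)) /\ (forall x, X x -> exists2 t, P t & f t = x) /\
      (forall t u, P t -> P u -> (f t = f u <-> E t u)) &
      forall pi t, P t -> f (tact pi t) = act pi (f t)].

Definition in_span (V : lmodType F) (X : V -> Prop) (v : V) : Prop :=
  exists (n : nat) (c : 'I_n -> F) (x : 'I_n -> V),
    (forall i, X (x i)) /\ v = \sum_(i < n) c i *: x i.

Definition of_spanned_on (V : lmodType F) (act : autom A -> V -> V)
  (W : V -> Prop) : Prop :=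
  exists X : V -> Prop,
    [/\ forall x, X x -> W x, invariant act X, orbit_finite_subset act X &
        forall w, W w -> in_span X w].

Definition ofs_space (V : lmodType F) (act : autom A -> V -> V) : Prop :=
  [/\ lin_action act, fin_supp act & of_spanned_on act (fun _ => True)].

Definition eq_subspace (V : lmodType F) (act : autom A -> V -> V)
  (W : V -> Prop) : Prop :=
  [/\ W 0, forall u v, W u -> W v -> W (u + v),
      forall (c : F) v, W v -> W (c *: v) & invariant act W].

Definition strict_chain (V : lmodType F) (act : autom A -> V -> V)
  (C : nat -> V -> Prop) : Prop :=
  forall n, [/\ eq_subspace act (C n),
                (forall v, C n v -> C n.+1 v) &
                exists v, C n.+1 v /\ ~ C n v].

Definition Lin (d : nat) : lmodType F := {malg F[d.-tuple A]}.

Definition lin_act (d : nat) (pi : autom A) (f : Lin d) : Lin d :=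
  \sum_(k <- msupp f) << f@_k *g tact pi k >>.

(* V is equivariantly linearly isomorphic to the quotient U/W, expressed by
   an equivariant linear map phi defined on U, onto V, with kernel W. *)
Definition quotient_presentation (V : lmodType F) (act : autom A -> V -> V)
  (d : nat) (U W : Lin d -> Prop) (phi : Lin d -> V) : Prop :=
  [/\ forall u v, U u -> U v -> phi (u + v) = phi u + phi v,
      forall (c : F) u, U u -> phi (c *: u) = c *: phi u,
      forall pi u, U u -> phi (lin_act pi u) = act pi (phi u),
      forall v : V, exists2 u, U u & phi u = v &
      forall u, U u -> (phi u = 0 <-> W u)].

End Spaces.

(* Main.v *)
Require Import Defs.
From HB Require Import structures.
From mathcomp Require Import all_boot all_algebra.
From mathcomp Require Import finmap monalg.
From Stdlib Require Import ClassicalDescription ClassicalEpsilon Classical.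
Set Implicit Arguments.
Unset Strict Implicit.
Unset Printing Implicit Defensive.
Import GRing.Theory.
Local Open Scope ring_scope.


Section Auts.
Variable A : structure.

Lemma map_tuple_id d (t : d.-tuple A) : map_tuple id t = t.
Proof. by apply: eq_from_tnth => i; rewrite tnth_map. Qed.

Lemma map_tuple_comp d (f g : A -> A) (t : d.-tuple A) :
  map_tuple f (map_tuple g t) = map_tuple (f \o g) t.
Proof. by apply: eq_from_tnth => i; rewrite !tnth_map. Qed.

Lemma map_tuple_ext d (f g : A -> A) (t : d.-tuple A) : f =1 g ->
  map_tuple f t = map_tuple g t.
Proof. by move=> fg; apply: eq_from_tnth => i; rewrite !tnth_map fg. Qed.

Definition aut_id : autom A.
Proof.
refine (@Autom A id id (fun _ => erefl) (fun _ => erefl) _).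
by move=> s t; rewrite map_tuple_id.
Defined.

Definition aut_invm (pi : autom A) : autom A.
Proof.
refine (@Autom A (aut_inv pi) pi (aut_invK pi) (aut_funK pi) _).
move=> s t.
have -> : Defs.rel t <-> Defs.rel (map_tuple pi (map_tuple (aut_inv pi) t)).
  rewrite map_tuple_comp (@map_tuple_ext _ _ id) ?map_tuple_id //.
  by move=> a /=; rewrite aut_invK.
by symmetry; apply: aut_rel.
Defined.

Definition aut_comp (pi sigma : autom A) : autom A.
Proof.
refine (@Autom A (pi \o sigma) (aut_inv sigma \o aut_inv pi) _ _ _).
- by move=> a /=; rewrite !aut_funK.
- by move=> a /=; rewrite !aut_invK.
move=> s t; rewrite (aut_rel sigma) (aut_rel pi (map_tuple sigma t)).
by rewrite map_tuple_comp.
Defined.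

Lemma aut_invmE pi a : aut_invm pi a = aut_inv pi a. Proof. by []. Qed.

Lemma tactK d pi (t : d.-tuple A) : tact (aut_invm pi) (tact pi t) = t.
Proof. by rewrite /tact map_tuple_comp (@map_tuple_ext _ _ id) ?map_tuple_id // => a /=; rewrite aut_funK. Qed.

Lemma tactKV d pi (t : d.-tuple A) : tact pi (tact (aut_invm pi) t) = t.
Proof. by rewrite /tact map_tuple_comp (@map_tuple_ext _ _ id) ?map_tuple_id // => a /=; rewrite aut_invK. Qed.

Lemma aut_inj (pi : autom A) : injective pi.
Proof. exact: can_inj (aut_funK pi). Qed.

End Auts.


Section LinTh.
Variables (F : fieldType) (A : structure) (d : nat).
Local Notation L := (Lin F A d).

Definition liftL (V : lmodType F) (h : d.-tuple A -> V) (g : L) : V :=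
  \sum_(k <- msupp g) g@_k *: h k.

Lemma liftLEw (V : lmodType F) (h : d.-tuple A -> V) (g : L) D :
  (msupp g `<=` D)%fset -> liftL h g = \sum_(k <- D) g@_k *: h k.
Proof.
move=> le; rewrite /liftL [LHS](big_fset_incl _ le) => //= x xd /mcoeff_outdom ->.
by rewrite scale0r.
Qed.

Lemma liftLD (V : lmodType F) (h : d.-tuple A -> V) (g1 g2 : L) :
  liftL h (g1 + g2) = liftL h g1 + liftL h g2.
Proof.
set D := (msupp g1 `|` msupp g2)%fset.
rewrite (@liftLEw _ _ _ D) ?msuppD_le // (@liftLEw _ _ g1 D) ?fsubsetUl //.
rewrite (@liftLEw _ _ g2 D) ?fsubsetUr // -big_split /=.
by apply: eq_bigr => k _; rewrite mcoeffD scalerDl.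
Qed.

Lemma liftLZ (V : lmodType F) (h : d.-tuple A -> V) c (g : L) :
  liftL h (c *: g) = c *: liftL h g.
Proof.
rewrite (@liftLEw _ _ _ (msupp g)) ?msuppZ_le // /liftL scaler_sumr.
by apply: eq_bigr => k _; rewrite mcoeffZ scalerA.
Qed.

Lemma liftL0 (V : lmodType F) (h : d.-tuple A -> V) : liftL h 0 = 0.
Proof. by rewrite /liftL msupp0 big_seq_fset0. Qed.

Lemma liftLU (V : lmodType F) (h : d.-tuple A -> V) k c :
  liftL h << c *g k >> = c *: h k.
Proof. by rewrite (@liftLEw _ _ _ _ msuppU_le) big_seq_fset1 mcoeffUU. Qed.

Lemma malgU_scale c (k : d.-tuple A) : << c *g k >> = c *: (<< k >> : L).
Proof.
by apply/malgP => k'; rewrite mcoeffZ !mcoeffU; case: (k == k'); rewrite /= ?mulr1n ?mulr0n ?mulr1 ?mulr0.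
Qed.

Lemma liftL_basis (g : L) : liftL (fun k => (<< k >> : L)) g = g.
Proof.
rewrite [RHS]monalgE /liftL; apply: eq_bigr => k _; by rewrite [RHS]malgU_scale.
Qed.

Lemma lin_actE pi (g : L) : lin_act pi g = liftL (fun k => (<< tact pi k >> : L)) g.
Proof. by rewrite /lin_act /liftL; apply: eq_bigr => k _; rewrite malgU_scale. Qed.

Lemma liftL_morph (V W : lmodType F) (phi : V -> W) (h : d.-tuple A -> V) g :
  (forall u v, phi (u + v) = phi u + phi v) -> (forall c v, phi (c *: v) = c *: phi v) ->
  phi (liftL h g) = liftL (fun k => phi (h k)) g.
Proof.
move=> phiD phiZ; have phi0 : phi 0 = 0.
  by rewrite -(scale0r 0) phiZ scale0r.
rewrite /liftL (big_morph phi phiD phi0); apply: eq_bigr => k _; exact: phiZ.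
Qed.

Lemma lin_act_lin : lin_action (@lin_act F A d).
Proof.
split.
- by move=> pi u v; rewrite !lin_actE liftLD.
- by move=> pi c v; rewrite !lin_actE liftLZ.
- move=> rho v rhoid; rewrite lin_actE -[RHS]liftL_basis /liftL.
  by apply: eq_bigr => k _; rewrite /tact (@map_tuple_ext _ _ _ id) ?map_tuple_id.
- move=> pi sigma rho v rhoE.
  rewrite [in RHS](lin_actE sigma) (@liftL_morph _ _ (lin_act pi)).
  + rewrite lin_actE; apply: eq_bigr => k _; rewrite lin_actE liftLU scale1r.
    by rewrite /tact map_tuple_comp (@map_tuple_ext _ _ _ (pi \o sigma)).
  + by move=> u w; rewrite !lin_actE liftLD.
  + by move=> c w; rewrite !lin_actE liftLZ.
Qed.

Lemma lin_actU pi k : lin_act pi (<< k >> : L) = << tact pi k >>.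
Proof. by rewrite lin_actE liftLU scale1r. Qed.

End LinTh.

Section Span.
Variables (F : fieldType) (V : lmodType F).
Implicit Types (X Y : V -> Prop).

Lemma span0 X : in_span X 0.
Proof. by exists 0%N, (fun _ => 0), (fun _ => 0); split => [[]//|]; rewrite big_ord0. Qed.

Lemma span_cons X c x v : X x -> in_span X v -> in_span X (c *: x + v).
Proof.
move=> Xx [n [cs [xs [Xxs ->]]]].
exists n.+1, (fun i => if unlift ord0 i is Some j then cs j else c),
  (fun i => if unlift ord0 i is Some j then xs j else x); split.
  by move=> i; case: unlift.
by rewrite big_ord_recl unlift_none; congr (_ + _); apply: eq_bigr => i _; rewrite liftK.
Qed.

Lemma span_base X x : X x -> in_span X x.
Proof. by move=> Xx; rewrite -[x]addr0 -[x]scale1r; apply: span_cons => //; apply: span0. Qed.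

Lemma spanD X u v : in_span X u -> in_span X v -> in_span X (u + v).
Proof.
move=> [n [cs [xs [Xxs ->]]]] Sv; elim: n cs xs Xxs => [|n IH] cs xs Xxs.
  by rewrite big_ord0 add0r.
rewrite big_ord_recl -addrA; apply: span_cons => //.
exact: (IH (fun i => cs (lift ord0 i)) (fun i => xs (lift ord0 i))).
Qed.

Lemma spanZ X c v : in_span X v -> in_span X (c *: v).
Proof.
move=> [n [cs [xs [Xxs ->]]]]; exists n, (fun i => c * cs i), xs; split => //.
by rewrite scaler_sumr; apply: eq_bigr => i _; rewrite scalerA.
Qed.

Lemma span_sub X Y v : (forall x, X x -> Y x) -> in_span X v -> in_span Y v.
Proof. by move=> XY [n [cs [xs [Xxs ->]]]]; exists n, cs, xs; split => // i; apply: XY. Qed.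

Lemma span_closed X (S : V -> Prop) v : S 0 -> (forall u w, S u -> S w -> S (u + w)) ->
  (forall c w, S w -> S (c *: w)) -> (forall x, X x -> S x) -> in_span X v -> S v.
Proof.
move=> S0 SD SZ XS [n [cs [xs [Xxs ->]]]]; elim: n cs xs Xxs => [|n IH] cs xs Xxs.
  by rewrite big_ord0.
rewrite big_ord_recl; apply: SD; first by apply: SZ; apply: XS.
exact: (IH (fun i => cs (lift ord0 i)) (fun i => xs (lift ord0 i))).
Qed.

Lemma span_seq (T : eqType) X (s : seq T) (c : T -> F) (h : T -> V) :
  (forall k, k \in s -> X (h k)) -> in_span X (\sum_(k <- s) c k *: h k).
Proof.
elim: s => [|a s IH] Hs; first by rewrite big_nil; apply: span0.
rewrite big_cons; apply: span_cons; first by apply: Hs; rewrite inE eqxx.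
by apply: IH => k ks; apply: Hs; rewrite inE ks orbT.
Qed.

End Span.

Lemma map_span (F : fieldType) (V W : lmodType F) (U : V -> Prop) (phi : V -> W) X (Y : W -> Prop) v :
  U 0 -> (forall u w, U u -> U w -> U (u + w)) -> (forall c w, U w -> U (c *: w)) ->
  (forall u w, U u -> U w -> phi (u + w) = phi u + phi w) ->
  (forall c u, U u -> phi (c *: u) = c *: phi u) ->
  (forall x, X x -> U x /\ Y (phi x)) -> in_span X v -> in_span Y (phi v).
Proof.
move=> U0 UD UZ phiD phiZ XY [n [cs [xs [Xxs ->]]]].
elim: n cs xs Xxs => [|n IH] cs xs Xxs.
  rewrite big_ord0; have := phiZ 0 0 U0; rewrite !scale0r => ->.
  exact: span0.
have Usum : forall m (c : 'I_m -> F) (x : 'I_m -> V), (forall i, X (x i)) ->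
    U (\sum_(i < m) c i *: x i).
  move=> m c x Xx; apply: (@span_closed _ _ X) => //.
    by move=> y /XY [].
  by exists m, c, x.
rewrite big_ord_recl phiD; first last.
- by apply: Usum.
- by apply: UZ; case: (XY _ (Xxs ord0)).
rewrite phiZ; last by case: (XY _ (Xxs ord0)).
apply: span_cons; first by case: (XY _ (Xxs ord0)).
exact: (IH (fun i => cs (lift ord0 i)) (fun i => xs (lift ord0 i))).
Qed.


Section ActTh.
Variables (F : fieldType) (A : structure) (V : lmodType F) (act : autom A -> V -> V).
Hypothesis Hact : lin_action act.

Lemma actD (pi : autom A) u v : act pi (u + v) = act pi u + act pi v.
Proof. by case: Hact. Qed.
Lemma actZ (pi : autom A) c v : act pi (c *: v) = c *: act pi v.
Proof. by case: Hact. Qed.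
Lemma act0 (pi : autom A) : act pi 0 = 0.
Proof. by have := actZ pi 0 0; rewrite !scale0r. Qed.
Lemma act_id (rho : autom A) v : (forall a, rho a = a) -> act rho v = v.
Proof. by case: Hact => _ _ H _; apply: H. Qed.
Lemma act_comp (pi sigma rho : autom A) v : (forall a, rho a = pi (sigma a)) ->
  act rho v = act pi (act sigma v).
Proof. by case: Hact => _ _ _ H; apply: H. Qed.

Lemma actK (pi : autom A) v : act (aut_invm pi) (act pi v) = v.
Proof.
rewrite -(@act_comp _ _ (aut_id A)); first exact: act_id.
by move=> a /=; rewrite aut_funK.
Qed.

Lemma actKV (pi : autom A) v : act pi (act (aut_invm pi) v) = v.
Proof.
rewrite -(@act_comp _ _ (aut_id A)); first exact: act_id.
by move=> a /=; rewrite aut_invK.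
Qed.

Lemma act_supp_eq S w (pi sigma : autom A) : supported_by act S w ->
  (forall a, a \in S -> pi a = sigma a) -> act pi w = act sigma w.
Proof.
move=> Sw eqS.
rewrite (@act_comp sigma (aut_comp (aut_invm sigma) pi)).
  by rewrite Sw // => a aS /=; rewrite eqS // aut_funK.
by move=> a /=; rewrite aut_invK.
Qed.

Lemma span_act X (pi : autom A) v : Defs.invariant act X -> in_span X v -> in_span X (act pi v).
Proof.
move=> iX [n [cs [xs [Xxs ->]]]]; exists n, cs, (fun i => act pi (xs i)); split.
  by move=> i; apply: iX.
rewrite (big_morph (act pi) (actD pi) (act0 pi)); apply: eq_bigr => i _; exact: actZ.
Qed.

Lemma span_eq_subspace X : Defs.invariant act X -> eq_subspace act (in_span X).
Proof.
move=> iX; split.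
- exact: span0.
- by move=> u v; apply: spanD.
- by move=> c v; apply: spanZ.
- by move=> pi v; apply: span_act.
Qed.

End ActTh.

Section LinOfs.
Variables (F : fieldType) (A : structure) (d : nat).
Local Notation L := (Lin F A d).

Lemma lin_supported (g : L) :
  supported_by (@lin_act F A d) (flatten (map (fun k : d.-tuple A => val k) (msupp g))) g.
Proof.
move=> pi Hpi; rewrite [RHS]monalgE /lin_act big_seq [RHS]big_seq.
apply: eq_bigr => k kg; congr (<< _ *g _ >>).
apply: eq_from_tnth => i; rewrite tnth_map; apply: Hpi.
apply/flattenP; exists (val k); first by apply: map_f.
exact: mem_tnth.
Qed.

Lemma lin_fin_supp : fin_supp (@lin_act F A d).
Proof. by move=> g; eexists; apply: lin_supported. Qed.

Lemma malgU1_inj : injective (fun k : d.-tuple A => (<< k >> : L)).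
Proof.
move=> t u /(congr1 (mcoeff t)); rewrite !mcoeffU eqxx.
by case: eqP => // _ /eqP; rewrite mulr1n mulr0n oner_eq0.
Qed.

Lemma lin_ofs : ofs_space (@lin_act F A d).
Proof.
split; [exact: lin_act_lin | exact: lin_fin_supp |].
exists (fun v => exists k, v = << k >>); split => //.
- by move=> pi v [k ->]; exists (tact pi k); rewrite lin_actU.
- exists d, (fun _ => True), (fun t u => t = u), (fun k => << k >>); split => //.
  + by split=> //; split=> [t u _ _ ->|t u w _ _ _ -> ->].
  + by move=> pi t u _ _ ->.
  + split; first by move=> t _; exists t.
    split; first by move=> x [k ->]; exists k.
    move=> t u _ _; split; [exact: malgU1_inj | by move=> ->].
  + by move=> pi t _; rewrite lin_actU.
- move=> w _; rewrite -[w]liftL_basis /liftL; apply: span_seq => k _.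
  by exists k.
Qed.

End LinOfs.

Section Misc.
Variable A : structure.

Lemma fin_orbits d : oligomorphic A -> exists reps : seq (d.-tuple A),
  forall t : d.-tuple A, exists2 r, r \in reps & exists pi : autom A, tact pi r = t.
Proof.
case: d => [|d] olig; last by apply: olig.
exists [:: [tuple]] => t; exists [tuple]; rewrite ?inE //.
by exists (aut_id A); rewrite tuple0 [RHS]tuple0.
Qed.

End Misc.

Section Cover.
Variables (F : fieldType) (A : structure) (V : lmodType F) (act : autom A -> V -> V).
Hypothesis Hact : lin_action act.

Definition btail d (t : (d.+1).-tuple A) : d.-tuple A := behead_tuple t.

Lemma btail_tact d pi (t : (d.+1).-tuple A) : btail (tact pi t) = tact pi (btail t).
Proof. by apply: val_inj; rewrite /= behead_map. Qed.

Lemma btail_cons d a (t : d.-tuple A) : btail [tuple of a :: t] = t.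
Proof. by apply: val_inj. Qed.

Lemma ofs_cover (a0 : A) : of_spanned_on act (fun _ => True) ->
  exists d (Phi : Lin F A d.+1 -> V),
    [/\ forall u v, Phi (u + v) = Phi u + Phi v,
        forall c u, Phi (c *: u) = c *: Phi u,
        forall pi u, Phi (lin_act pi u) = act pi (Phi u) &
        forall v, exists u, Phi u = v].
Proof.
move=> [X [_ iX [d [P [E [f [Pinv _ _ [fX [fsurj _]] feq]]]]] Xspan]].
pose h (t : (d.+1).-tuple A) : V :=
  if excluded_middle_informative (P (btail t)) then f (btail t) else 0.
exists d, (liftL h).
have PhiD : forall u v, liftL h (u + v) = liftL h u + liftL h v by move=> u v; apply: liftLD.
have PhiZ : forall c u, liftL h (c *: u) = c *: liftL h u by move=> c u; apply: liftLZ.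
split => //.
- move=> pi u; rewrite lin_actE (liftL_morph _ _ PhiD PhiZ).
  rewrite (liftL_morph _ _ (actD Hact pi) (actZ Hact pi)).
  apply: eq_bigr => k _; rewrite liftLU scale1r; congr (_ *: _).
  rewrite /h btail_tact.
  case: excluded_middle_informative => [Pk|nPk]; case: excluded_middle_informative => Pk' //.
  + by rewrite feq.
  + by case: Pk'; rewrite -(tactK pi (btail k)); apply: Pinv.
  + by case: nPk; apply: Pinv.
  + by rewrite act0.
- move=> v; have [n [cs [xs [Xxs ->]]]] := Xspan v I.
  elim: n cs xs Xxs => [|n IH] cs xs Xxs.
    by exists 0; rewrite big_ord0 liftL0.
  have [u Hu] := IH (fun i => cs (lift ord0 i)) (fun i => xs (lift ord0 i)) (fun i => Xxs _).
  have [t Pt ft] := fsurj _ (Xxs ord0).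
  exists (cs ord0 *: << [tuple of a0 :: t] >> + u).
  rewrite PhiD PhiZ Hu liftLU scale1r big_ord_recl; congr (_ *: _ + _).
  by rewrite /h btail_cons; case: excluded_middle_informative.
Qed.

End Cover.

Section Chains.
Variables (F : fieldType) (A : structure).

Lemma chain_mono (V : lmodType F) (act : autom A -> V -> V) C :
  strict_chain act C -> forall n m v, (n <= m)%N -> C n v -> C m v.
Proof.
move=> HC n m v; elim: m => [|m IH]; first by rewrite leqn0 => /eqP ->.
rewrite leq_eqVlt => /orP [/eqP -> //|]; rewrite ltnS => nm Cn.
by case: (HC m) => _ H _; apply: H; apply: IH.
Qed.

Lemma c_to_b (a0 : A) (V : lmodType F) (act : autom A -> V -> V) :
  ofs_space act ->
  (forall d, (1 <= d)%N -> ~ exists C : nat -> Lin F A d -> Prop, strict_chain (@lin_act F A d) C) ->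
  ~ exists C : nat -> V -> Prop, strict_chain act C.
Proof.
move=> [Hact _ Hsp] Hc [C HC].
have [d [Phi [PhiD PhiZ Phieq Phisurj]]] := ofs_cover Hact a0 Hsp.
have Phi0 : Phi 0 = 0 by have := PhiZ 0 0; rewrite !scale0r.
apply: (Hc d.+1 erefl); exists (fun n g => C n (Phi g)) => n.
have [[C0 CD CZ Ci] Cmono [v [v1 v0]]] := HC n.
split.
- split; first by rewrite Phi0.
  + by move=> u w Cu Cw; rewrite PhiD; apply: CD.
  + by move=> c w Cw; rewrite PhiZ; apply: CZ.
  + by move=> pi w Cw; rewrite /= Phieq; apply: Ci.
- by move=> g; apply: Cmono.
- by have [u Hu] := Phisurj v; exists u; rewrite Hu.
Qed.

Lemma b_to_c (Hb : forall (V : lmodType F) (act : autom A -> V -> V),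
      ofs_space act -> ~ exists C : nat -> V -> Prop, strict_chain act C) :
  forall d, (1 <= d)%N -> ~ exists C : nat -> Lin F A d -> Prop, strict_chain (@lin_act F A d) C.
Proof. by move=> d _; apply: Hb; apply: lin_ofs. Qed.

Lemma a_to_b (olig : oligomorphic A)
  (Ha : forall (V : lmodType F) (act : autom A -> V -> V),
      ofs_space act -> forall W : V -> Prop, eq_subspace act W -> of_spanned_on act W)
  (V : lmodType F) (act : autom A -> V -> V) :
  ofs_space act -> ~ exists C : nat -> V -> Prop, strict_chain act C.
Proof.
move=> Hofs [C HC]; have Hact : lin_action act by case: Hofs.
pose Un v := exists n, C n v.
have mono := chain_mono HC.
have HUn : eq_subspace act Un.
  split.
  - by exists 0%N; case: (HC 0%N) => [[]].
  - move=> u v [n Cu] [m Cv]; exists (maxn n m).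
    case: (HC (maxn n m)) => [[_ CD _ _] _ _]; apply: CD.
      by apply: (mono n) => //; apply: leq_maxl.
    by apply: (mono m) => //; apply: leq_maxr.
  - by move=> c v [n Cv]; exists n; case: (HC n) => [[_ _ CZ _] _ _]; apply: CZ.
  - by move=> pi v [n Cv]; exists n; case: (HC n) => [[_ _ _ Ci] _ _]; apply: Ci.
have [X [XU iX [d [P [E [f [Pinv _ _ [fX [fsurj _]] feq]]]]] Xspan]] := Ha _ _ Hofs _ HUn.
have [reps Hreps] := fin_orbits d olig.
have [N HN] : exists N, forall r, r \in reps -> P r -> C N (f r).
  elim: reps {Hreps} => [|r reps [N HN]]; first by exists 0%N.
  have [Pr|nPr] := classic (P r).
    have [M CM] := XU _ (fX _ Pr).
    exists (maxn N M) => r'; rewrite inE => /orP [/eqP -> _|r'in Pr'].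
      by apply: (mono M) => //; apply: leq_maxr.
    by apply: (mono N); [apply: leq_maxl | apply: HN].
  exists N => r'; rewrite inE => /orP [/eqP -> //|r'in Pr'].
  by apply: HN.
have [[C0 CD CZ Ci] _ [v [v1 v0]]] := HC N.
have XN : forall x, X x -> C N x.
  move=> x /fsurj [t Pt <-]; have [r rin [pi rt]] := Hreps t.
  have Pr : P r by rewrite -(tactK pi r) rt; apply: Pinv.
  by rewrite -rt feq //; apply: Ci; apply: HN.
apply: v0; have [n Cn] : Un v by exists N.+1.
have := Xspan v (ex_intro _ N.+1 v1).
exact: (span_closed C0 CD CZ XN).
Qed.

End Chains.

Section Further.
Variables (F : fieldType) (A : structure).

Lemma further_fwd (a0 : A) (V : lmodType F) (act : autom A -> V -> V) :
  ofs_space act ->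
  exists d : nat, (1 <= d)%N /\
          exists (U W : Lin F A d -> Prop) (phi : Lin F A d -> V),
            [/\ eq_subspace (@lin_act F A d) U, eq_subspace (@lin_act F A d) W,
                (forall w, W w -> U w) &
                quotient_presentation act U W phi].
Proof.
move=> [Hact _ Hsp].
have [d [Phi [PhiD PhiZ Phieq Phisurj]]] := ofs_cover Hact a0 Hsp.
have Phi0 : Phi 0 = 0 by have := PhiZ 0 0; rewrite !scale0r.
exists d.+1; split => //; exists (fun _ => True), (fun g => Phi g = 0), Phi; split => //.
- split => //.
  + by move=> u v Hu Hv; rewrite PhiD Hu Hv addr0.
  + by move=> c v Hv; rewrite PhiZ Hv scaler0.
  + by move=> pi v Hv; rewrite Phieq Hv act0.
- split => //.
  by move=> v; have [u Hu] := Phisurj v; exists u.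
Qed.

Lemma further_bwd
  (Ha : forall (V : lmodType F) (act : autom A -> V -> V),
      ofs_space act -> forall W : V -> Prop, eq_subspace act W -> of_spanned_on act W)
  (V : lmodType F) (act : autom A -> V -> V) :
  lin_action act ->
  (exists d : nat, (1 <= d)%N /\
          exists (U W : Lin F A d -> Prop) (phi : Lin F A d -> V),
            [/\ eq_subspace (@lin_act F A d) U, eq_subspace (@lin_act F A d) W,
                (forall w, W w -> U w) &
                quotient_presentation act U W phi]) ->
  ofs_space act.
Proof.
move=> Hact [d [_ [U [W [phi [HU _ _ [phiD phiZ phieq phisurj _]]]]]]].
have [U0 UD UZ Ui] := HU.
split => //.
- move=> v; have [u Uu <-] := phisurj v.
  have [S HS] := lin_fin_supp u; exists S => pi Hpi.
  by rewrite -phieq // HS.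
have [XU [XUU iXU [d' [P [E [f [Pinv _ _ [fX [fsurj _]] feq]]]]] XUspan]] :=
  Ha _ _ (lin_ofs F A d) U HU.
exists (fun v => exists2 u, XU u & v = phi u); split => //.
- move=> pi v [u XUu ->]; exists (lin_act pi u); first by apply: iXU.
  by rewrite phieq //; apply: XUU.
- exists d', P, (fun t u => phi (f t) = phi (f u)), (fun t => phi (f t)); split => //.
  + split; first by [].
    by split; [move=> t u _ _ -> | move=> t u w _ _ _ -> ->].
  + move=> pi t u Pt Pu /= Htu.
    by rewrite !feq // !phieq ?Htu //; apply: XUU; apply: fX.
  + split; first by move=> t Pt; exists (f t) => //; apply: fX.
    split => //.
    move=> x [u /fsurj [t Pt <-] ->]; by exists t.
  + by move=> pi t Pt; rewrite feq // phieq //; apply: XUU; apply: fX.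
- move=> v _; have [u Uu <-] := phisurj v.
  apply: (map_span U0 UD UZ phiD phiZ _ (XUspan u Uu)).
  by move=> x Xx; split; [apply: XUU | exists x].
Qed.

End Further.

Section Code.
Variables (A : structure) (b c : A).
Hypothesis bc : b != c.
Variables (n L : nat) (S : nat -> seq A).

Definition prefix i := b :: nseq i b ++ nseq (n - i) c.

Lemma prefix_size i : (i <= n)%N -> size (prefix i) = n.+1.
Proof. by move=> le; rewrite /= size_cat !size_nseq subnKC. Qed.

Lemma prefix_count (pi : autom A) i : count (pred1 (pi b)) (map pi (prefix i)) = i.+1.
Proof.
rewrite count_map.
have -> : count (preim pi (pred1 (pi b))) (prefix i) = count (pred1 b) (prefix i).
  by apply: eq_count => x /=; rewrite inj_eq //; apply: aut_inj.
have cb : (c == b) = false by apply: negbTE; rewrite eq_sym.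
by rewrite /= eqxx count_cat !count_nseq /= eqxx cb mul0n mul1n addn0 add1n.
Qed.

Definition code i := prefix i ++ (S i ++ nseq (L - size (S i)) b).

Lemma code_size i : (i <= n)%N -> (size (S i) <= L)%N -> size (code i) = (n.+1 + L)%N.
Proof. by move=> le1 le2; rewrite size_cat prefix_size // size_cat size_nseq subnKC. Qed.

Lemma code_inj (pi sigma : autom A) i j : (i <= n)%N -> (j <= n)%N ->
  map pi (code i) = map sigma (code j) -> i = j /\ {in S i, pi =1 sigma}.
Proof.
move=> le1 le2 Heq.
have Hp : map pi (prefix i) = map sigma (prefix j).
  have := congr1 (take n.+1) Heq; rewrite -!map_take !take_size_cat ?prefix_size //.
have Hb : pi b = sigma b by move: Hp => /= [].
have ij : i = j.
  have := congr1 (count (pred1 (pi b))) Hp.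
  by rewrite prefix_count Hb prefix_count => -[].
split => //; subst j.
have := congr1 (drop n.+1) Heq; rewrite -!map_drop !drop_size_cat ?prefix_size //.
move/eq_in_map => H a aS; apply: H; by rewrite mem_cat aS.
Qed.

End Code.

Section OrbitFin.
Variables (F : fieldType) (A : structure) (V : lmodType F) (act : autom A -> V -> V).
Hypothesis Hact : lin_action act.
Hypothesis Hfs : fin_supp act.
Variables (b c : A).
Hypothesis bc : b != c.

Definition supp (w : V) : seq A := proj1_sig (constructive_indefinite_description _ (Hfs w)).
Lemma supp_spec w : supported_by act (supp w) w.
Proof. exact: proj2_sig (constructive_indefinite_description _ (Hfs w)). Qed.

Definition Orb (ws : seq V) (v : V) :=
  exists i (pi : autom A), (i < size ws)%N /\ v = act pi (nth 0 ws i).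

Lemma sumn_ge x s : x \in s -> (x <= sumn s)%N.
Proof.
elim: s => [//|y s IH]; rewrite inE => /orP [/eqP ->|xs] /=; first exact: leq_addr.
by apply: leq_trans (IH xs) _; apply: leq_addl.
Qed.

Lemma Orb_inv ws : Defs.invariant act (Orb ws).
Proof.
move=> pi v [i [sigma [ilt ->]]]; exists i, (aut_comp pi sigma); split => //.
by rewrite (@act_comp _ _ _ _ Hact pi sigma (aut_comp pi sigma)).
Qed.

Lemma Orb_of ws : orbit_finite_subset act (Orb ws).
Proof.
pose n := size ws.
pose Sx i := supp (nth 0 ws i).
pose L := sumn (map (fun w => size (supp w)) ws).
have SL : forall i, (i < n)%N -> (size (Sx i) <= L)%N.
  move=> i ilt; apply: sumn_ge; rewrite /Sx -(nth_map 0 0 (fun w => size (supp w))) //.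
  by apply: mem_nth; rewrite size_map.
pose D := (n.+1 + L)%N.
pose cd i := code b c n L Sx i.
pose P (t : D.-tuple A) := exists ip : nat * autom A, (ip.1 < n)%N /\ val t = map ip.2 (cd ip.1).
pose f (t : D.-tuple A) : V := match excluded_middle_informative (P t) with
  | left H => let ip := proj1_sig (constructive_indefinite_description _ H) in
              act ip.2 (nth 0 ws ip.1)
  | right _ => 0 end.
have f_spec : forall t i (pi : autom A), (i < n)%N -> val t = map pi (cd i) -> f t = act pi (nth 0 ws i).
  move=> t i pi ilt Ht; rewrite /f; case: excluded_middle_informative => [H|nH]; last first.
    by case: nH; exists (i, pi).
  case: (constructive_indefinite_description _ H) => [[j rho] [jlt Hj]].
  rewrite [sval _]/=.
  have [ji agree] : j = i /\ {in Sx j, rho =1 pi}.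
    apply: (code_inj (n:=n) (L:=L) bc); [exact: ltnW | exact: ltnW | by rewrite -Hj Ht].
  subst j; apply: act_supp_eq => //; first exact: supp_spec.
  by move=> a aS; apply: agree.
have f_eq : forall (pi : autom A) t, P t -> f (tact pi t) = act pi (f t).
  move=> pi t [[i sigma] [ilt Ht]].
  rewrite (f_spec t i sigma) // (f_spec _ i (aut_comp pi sigma)) //.
    exact: act_comp.
  by transitivity (map pi (val t)); [| rewrite Ht -map_comp].
exists D, P, (fun t u => f t = f u), f; split.
- move=> pi t [[i sigma] [ilt Ht]]; exists (i, aut_comp pi sigma); split => //.
  by transitivity (map pi (val t)); [| rewrite Ht -map_comp].
- split; first by [].
  by split; [move=> t u _ _ -> | move=> t u w _ _ _ -> ->].
- by move=> pi t u Pt Pu /= Htu; rewrite !f_eq // Htu.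
- split.
    move=> t [[i sigma] [ilt Ht]]; exists i, sigma; split => //.
    exact: f_spec.
  split; last by [].
  move=> x [i [pi [ilt ->]]].
  have sz : size (map pi (cd i)) == D.
    by rewrite size_map /cd code_size ?SL // ltnW.
  exists (Tuple sz); first by exists (i, pi).
  exact: f_spec.
- exact: f_eq.
Qed.

End OrbitFin.

Section BA.
Variables (F : fieldType) (A : structure).

Lemma b_to_a (e : nat -> A) (einj : injective e)
  (Hb : forall (V : lmodType F) (act : autom A -> V -> V),
      ofs_space act -> ~ exists C : nat -> V -> Prop, strict_chain act C)
  (V : lmodType F) (act : autom A -> V -> V) :
  ofs_space act -> forall W : V -> Prop, eq_subspace act W -> of_spanned_on act W.
Proof.
move=> Hofs W [W0 WD WZ Wi]; have [Hact Hfs _] := Hofs.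
have bc : e 0%N != e 1%N by apply/eqP => /einj.
apply: NNPP => nW.
have ex : forall ws, (forall w, w \in ws -> W w) ->
    exists v, W v /\ ~ in_span (Orb act ws) v.
  move=> ws Hws; apply: NNPP => H; apply: nW; exists (Orb act ws); split.
  - move=> x [i [pi [ilt ->]]]; apply: Wi; apply: Hws; exact: mem_nth.
  - exact: Orb_inv.
  - exact: Orb_of Hact Hfs _ _ bc ws.
  - move=> w Ww; apply: NNPP => nsp; apply: H; by exists w.
pose next ws := epsilon (inhabits (0 : V)) (fun v => W v /\ ~ in_span (Orb act ws) v).
pose wsf n := iter n (fun s => next s :: s) [::].
have allW : forall n w, w \in wsf n -> W w.
  elim => [//|n IH] w; rewrite /= inE => /orP [/eqP ->|]; last exact: IH.
  exact: (proj1 (epsilon_spec _ _ (ex _ IH))).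
have nspan : forall n, ~ in_span (Orb act (wsf n)) (next (wsf n)).
  by move=> n; exact: (proj2 (epsilon_spec _ _ (ex _ (allW n)))).
apply: (Hb _ _ Hofs); exists (fun n => in_span (Orb act (wsf n))) => n; split.
- by apply: span_eq_subspace => //; apply: Orb_inv.
- move=> v; apply: span_sub => x [i [pi [ilt ->]]].
  by exists i.+1, pi.
- exists (next (wsf n)); split => //.
  apply: span_base; exists 0%N, (aut_id A); split => //.
  by rewrite /= act_id.
Qed.

End BA.
Theorem mainTheorem1 (F : fieldType) (A : structure) :
  countably_infinite A -> oligomorphic A ->
  let cond_a := forall (V : lmodType F) (act : autom A -> V -> V),
      ofs_space act -> forall W : V -> Prop, eq_subspace act W ->
      of_spanned_on act W in
  let cond_b := forall (V : lmodType F) (act : autom A -> V -> V),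
      ofs_space act -> ~ exists C : nat -> V -> Prop, strict_chain act C in
  let cond_c := forall d : nat, (1 <= d)%N ->
      ~ exists C : nat -> Lin F A d -> Prop, strict_chain (@lin_act F A d) C in
  [/\ (cond_a <-> cond_b), (cond_b <-> cond_c) &
      (cond_a ->
       forall (V : lmodType F) (act : autom A -> V -> V),
         lin_action act ->
         (ofs_space act <->
          exists d : nat, (1 <= d)%N /\
          exists (U W : Lin F A d -> Prop) (phi : Lin F A d -> V),
            [/\ eq_subspace (@lin_act F A d) U, eq_subspace (@lin_act F A d) W,
                (forall w, W w -> U w) &
                quotient_presentation act U W phi]))].
Proof.
move=> [e einj] olig /=.
split.
- split; [exact: a_to_b olig | exact: b_to_a einj].
- split; first exact: b_to_c.
  move=> Hc V act Hofs.
  by apply: (c_to_b (e 0%N) Hofs Hc).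
- move=> Ha V act Hact; split.
    by move=> H; apply: (further_fwd (e 0%N) H).
  by move=> H; apply: (further_bwd Ha Hact H).
Qed.
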